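(* Let $n$ be a positive integer and $m$ a positive even integer. Let $\mathcal{A}$ and $\mathcal{B}$ be $m$-th order $n$-dimensional real weakly symmetric tensors with $\mathcal{B}$ positive definite, and let $\lambda_{\max}$ be the largest $\mathcal{B}_r$-eigenvalue of $\mathcal{A}$. Define $f_2:\mathbb{R}^n\to\mathbb{R}$ by $$f_2(x)=\frac{1}{2m}(\mathcal{B}x^m)^2-\frac{1}{m}\mathcal{A}x^m,$$ whose gradient is $\nabla f_2(x)=(\mathcal{B}x^m)\,\mathcal{B}x^{m-1}-\mathcal{A}x^{m-1}$. Then: (a) $f_2$ is coercive on $\mathbb{R}^n$, i.e. $f_2(x)\to+\infty$ as $\|x\|\to\infty$. (b) The critical points of $f_2$ are (i) $x=0$, and (ii) any $\mathcal{B}_r$-eigenvector $x$ of $\mathcal{A}$ associated with a $\mathcal{B}_r$-eigenvalue $\lambda>0$ of $\mathcal{A}$ satisfying $\mathcal{B}x^m=\lambda$. (c) If $\lambda_{\max}>0$, then $f_2$ attains its global minimum value $\min f_2(x)=-\frac{1}{2m}\lambda_{\max}^2$ at any $\mathcal{B}_r$-eigenvector associated with $\lambda_{\max}$ satisfying $\mathcal{B}x^m=\lambda_{\max}$. (d) If $\lambda_{\max}\le0$, then $x=0$ is the unique critical point of $f_2$, and it is the unique global minimizer of $f_2$ on $\mathbb{R}^n$.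
   Context: An $m$-th order $n$-dimensional real tensor is an array $\mathcal{A}=(A_{i_1\cdots i_m})$ with indices in $\{1,\dots,n\}$ and real entries. For $x\in\mathbb{R}^n$, $\mathcal{A}x^m=\sum_{i_1,\dots,i_m=1}^n A_{i_1\cdots i_m}x_{i_1}\cdots x_{i_m}$, and $\mathcal{A}x^{m-1}\in\mathbb{R}^n$ has $i$-th entry $\sum_{i_2,\dots,i_m=1}^n A_{i i_2\cdots i_m}x_{i_2}\cdots x_{i_m}$. A tensor is weakly symmetric if $\nabla(\mathcal{A}x^m)=m\,\mathcal{A}x^{m-1}$ for all $x$, and positive definite if $\mathcal{A}x^m>0$ for all $x\ne0$. With $\mathcal{B}$ weakly symmetric positive definite, $\lambda\in\mathbb{R}$ is a $\mathcal{B}_r$-eigenvalue of $\mathcal{A}$, with $\mathcal{B}_r$-eigenvector $x\in\mathbb{R}^n\setminus\{0\}$, if $\mathcal{A}x^{m-1}=\lambda\,\mathcal{B}x^{m-1}$. The set of $\mathcal{B}_r$-eigenvalues is nonempty and has a largest element $\lambda_{\max}$. *)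

(* Defs.v *)
From HB Require Import structures.
From mathcomp Require Import all_boot all_order all_algebra.
From mathcomp Require Import all_classical all_reals all_analysis.
Set Implicit Arguments. Unset Strict Implicit. Unset Printing Implicit Defensive.
Import Order.TTheory GRing.Theory Num.Theory.
Import numFieldNormedType.Exports.
Local Open Scope ring_scope.

(* An m-th order n-dimensional real tensor: entries A_{i_1 ... i_m} are
   A [:: i_1; ...; i_m]; only the values on index sequences of length m matter. *)
Definition tensor (R : realType) (n : nat) := seq 'I_n -> R.

Definition txm (R : realType) (n m : nat) (A : tensor R n) (x : 'rV[R]_n) : R :=
  \sum_(t : m.-tuple 'I_n) A (tval t) * \prod_(j <- tval t) x ord0 j.

Definition txm1 (R : realType) (n m : nat) (A : tensor R n) (x : 'rV[R]_n)
  : 'rV[R]_n :=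
  \row_(i < n) \sum_(t : m.-1.-tuple 'I_n) A (i :: tval t) * \prod_(j <- tval t) x ord0 j.

Definition evec (R : realType) (n : nat) (i : 'I_n) : 'rV[R]_n := delta_mx ord0 i.

Definition has_gradient (R : realType) (n : nat) (f : 'rV[R]_n -> R) (x g : 'rV[R]_n) :=
  forall i : 'I_n, is_derive x (evec R i) f (g ord0 i).

Definition weakly_symmetric (R : realType) (n m : nat) (A : tensor R n) :=
  forall x : 'rV[R]_n, has_gradient (txm m A) x (m%:R *: txm1 m A x).

Definition pos_def (R : realType) (n m : nat) (B : tensor R n) :=
  forall x : 'rV[R]_n, x != 0 -> 0 < txm m B x.

Definition Br_eigenpair (R : realType) (n m : nat) (A B : tensor R n)
  (lam : R) (x : 'rV[R]_n) :=
  x != 0 /\ txm1 m A x = lam *: txm1 m B x.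

Definition Br_eigenvalue (R : realType) (n m : nat) (A B : tensor R n) (lam : R) :=
  exists x, Br_eigenpair m A B lam x.

Definition critical_point (R : realType) (n : nat) (f : 'rV[R]_n -> R) (x : 'rV[R]_n) :=
  has_gradient f x 0.

Definition coercive (R : realType) (n : nat) (f : 'rV[R]_n -> R) :=
  forall M : R, exists r : R, forall x : 'rV[R]_n, r <= `|x| -> M <= f x.

Definition f2 (R : realType) (n m : nat) (A B : tensor R n) (x : 'rV[R]_n) : R :=
  (2 * m%:R)^-1 * (txm m B x) ^+ 2 - (m%:R)^-1 * txm m A x.

(* Main.v *)
Require Import Defs.
From HB Require Import structures.
From mathcomp Require Import all_boot all_order all_algebra.
From mathcomp Require Import all_classical all_reals all_analysis.
From mathcomp Require Import ring lra.
Import Order.TTheory GRing.Theory Num.Theory.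
Import numFieldNormedType.Exports.
Local Open Scope ring_scope.

Section Helpers.
Variable R : realType.
Variables n m : nat.
Implicit Types (A B : tensor R n) (x : 'rV[R]_n).

Lemma prod_scale (c : R) (s : seq 'I_n) (f : 'I_n -> R) :
  \prod_(j <- s) (c * f j) = c ^+ size s * \prod_(j <- s) f j.
Proof.
elim: s => [|a s IH]; first by rewrite !big_nil mulr1.
by rewrite !big_cons IH exprS /= mulrACA.
Qed.

Lemma txm_scale A (c : R) x : txm m A (c *: x) = c ^+ m * txm m A x.
Proof.
rewrite /txm big_distrr; apply: eq_bigr => t _.
under eq_bigr do rewrite mxE.
by rewrite prod_scale size_tuple mulrCA.
Qed.

Lemma txm0 A : (0 < m)%N -> txm m A 0 = 0.
Proof.
move=> m0; rewrite -(scale0r (0 : 'rV[R]_n)) txm_scale expr0n.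
by rewrite eqn0Ngt m0 mul0r.
Qed.

Lemma txm_euler A x : (0 < m)%N ->
  txm m A x = \sum_i x ord0 i * txm1 m A x ord0 i.
Proof.
case: m => // k _.
rewrite /txm /txm1.
under [RHS]eq_bigr do rewrite mxE big_distrr.
rewrite pair_big /=.
rewrite (reindex (fun p : 'I_n * k.-tuple 'I_n => [tuple of p.1 :: tval p.2])) /=.
  apply: eq_bigr => p _; rewrite big_cons /=.
  by rewrite mulrCA.
exists (fun t : k.+1.-tuple 'I_n => (thead t, [tuple of behead t])).
  by move=> [i t] _ /=; congr pair; apply: val_inj.
by move=> t _; rewrite [RHS]tuple_eta; apply: val_inj.
Qed.

Lemma txm_cont A : continuous (txm m A).
Proof.
rewrite /txm => x.
apply: (@continuous_big _ _ +%R 0 predT add_continuous) => t _.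
move=> y.
apply: (@continuousM _ _ (fun=> A (tval t)) (fun x => \prod_(j <- tval t) x ord0 j) y).
  exact: cst_continuous.
have := (@continuous_big R^o 'I_n *%R 1 predT mul_continuous _ (tval t)
  (fun j (x : 'rV[R]_n) => x ord0 j)).
move=> /(_ (fun j _ => @coord_continuous R 1 n ord0 j)); exact.
Qed.


Lemma line_is_derive (f : 'rV[R]_n -> R) a e (t l : R) :
  is_derive (a + t *: e) e f l -> is_derive t 1 (fun s : R => f (a + s *: e)) l.
Proof.
move=> [df dv].
have E : (fun h : R => h^-1 *: (((fun s : R => f (a + s *: e)) \o shift t) (h *: 1)
            - f (a + t *: e))) =
         (fun h : R => h^-1 *: ((f \o shift (a + t *: e)) (h *: e) - f (a + t *: e))).
  apply: funext => h /=; congr (_ *: (f _ - _)).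
  by rewrite scaler1 scalerDl addrCA addrA.
split; first by rewrite /derivable E.
by rewrite /derive E.
Qed.

Lemma fermat_max (f : 'rV[R]_n -> R) a e (l : R) :
  (forall y, f y <= f a) -> (forall y, derivable f y e) ->
  is_derive a e f l -> l = 0.
Proof.
move=> fmax fd fl.
pose h := fun s : R => f (a + s *: e).
have dh : forall t, derivable h t 1.
  move=> t; have := @line_is_derive f a e t _ (derivableP (fd (a + t *: e))).
  by case.
have h0 : is_derive (0:R) 1 h 0.
  apply: (@derive1_at_max R h (-1) 1 0).
  - by rewrite (le_trans (lerN10 R)) // ler01.
  - by move=> t _; exact: dh.
  - by rewrite in_itv /= ltrN10 ltr01.
  - by move=> t _; rewrite /h scale0r addr0; exact: fmax.
have hl : is_derive (0:R) 1 h l.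
  apply: (@line_is_derive f a e 0 l); by rewrite scale0r addr0.
by rewrite -(@derive_val _ _ _ _ _ _ _ hl) (@derive_val _ _ _ _ _ _ _ h0).
Qed.


Lemma f2_grad A B x : (0 < m)%N -> weakly_symmetric m A -> weakly_symmetric m B ->
  has_gradient (f2 m A B) x (txm m B x *: txm1 m B x - txm1 m A x).
Proof.
move=> m0 WA WB i.
have E : f2 m A B = (2 * m%:R)^-1 \*: (txm m B) ^+ 2 - (m%:R)^-1 \*: txm m A.
  by apply: funext => y; rewrite /f2 /= expr2.
rewrite E.
have HA := WA x i; have HB := WB x i.
apply: is_derive_eq.
have mR : (m%:R : R) != 0 by rewrite pnatr_eq0 -lt0n.
rewrite !mxE /= expr1.
set b := txm m B x; set s1 := \sum_t _; set s2 := \sum_t _.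
rewrite -![_ *: _]/(_ * _).
field; exact: mR.
Qed.

Definition sph : set 'rV[R]_n := [set x | `|x| = 1]%classic.

Lemma sph_compact : compact sph.
Proof.
apply: bounded_closed_compact.
  rewrite /= /bounded_near; near=> M => x /= ->.
  near: M; apply: nbhs_pinfty_ge; exact: num_real.
apply: (@preimage_closed _ _ (@Num.norm R 'rV[R]_n) [set 1]%classic).
  by move=> y _; exact: norm_continuous.
exact: closed_eq.
Unshelve. all: by end_near.
Qed.

Lemma normalize x : x != 0 -> sph (`|x|^-1 *: x).
Proof. by move=> x0; rewrite /sph /= normrZV // unitfE normr_eq0. Qed.

Lemma normalizeK x : x != 0 -> `|x| *: (`|x|^-1 *: x) = x.
Proof. by move=> x0; rewrite scalerA divff ?scale1r // normr_eq0. Qed.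

Lemma sph_neq0 x : sph x -> x != 0.
Proof. by rewrite /sph /= => h; apply/eqP => x0; move: h; rewrite x0 normr0 => /eqP; rewrite eq_sym oner_eq0. Qed.

Lemma B_lower B (x0 : 'rV[R]_n) : (0 < m)%N -> pos_def m B -> x0 != 0 ->
  exists2 beta : R, 0 < beta & forall x, beta * `|x| ^+ m <= txm m B x.
Proof.
move=> m0 PB x00.
have [c cS cmin] : exists2 c, c \in sph & forall t, t \in sph -> txm m B c <= txm m B t.
  apply: EVT_min_rV.
  - by exists (`|x0|^-1 *: x0); exact: normalize.
  - exact: sph_compact.
  - apply: continuous_subspaceT; exact: txm_cont.
have c0 : c != 0 by apply: sph_neq0; rewrite inE in cS.
exists (txm m B c); first exact: PB.
move=> x; have [->|x0'] := eqVneq x 0.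
  by rewrite txm0 // normr0 expr0n eqn0Ngt m0 mulr0.
rewrite -{2}(@normalizeK x x0') txm_scale mulrC ler_wpM2l //.
by apply: cmin; rewrite inE; apply: normalize.
Qed.


Lemma txmB_ge0 B x : (0 < m)%N -> pos_def m B -> 0 <= txm m B x.
Proof.
move=> m0 PB; have [->|x0] := eqVneq x 0; first by rewrite txm0.
exact/ltW/PB.
Qed.

Lemma rayleigh A B lam_max : (0 < m)%N ->
  weakly_symmetric m A -> weakly_symmetric m B -> pos_def m B ->
  Br_eigenvalue m A B lam_max ->
  (forall lam, Br_eigenvalue m A B lam -> lam <= lam_max) ->
  forall y, txm m A y <= lam_max * txm m B y.
Proof.
move=> m0 WA WB PB [x0 [x00 _]] lmax.
pose g := (txm m A) \* (fun u => (txm m B u)^-1).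
have [c cS cmax] : exists2 c, c \in sph & forall t, t \in sph -> g t <= g c.
  apply: EVT_max_rV.
  - by exists (`|x0|^-1 *: x0); exact: normalize.
  - exact: sph_compact.
  - apply: continuous_in_subspaceT => u uS.
    apply: continuousM; first exact: txm_cont.
    apply: continuousV; last exact: txm_cont.
    by apply/lt0r_neq0/PB/sph_neq0; rewrite inE in uS.
have c0 : c != 0 by apply: sph_neq0; rewrite inE in cS.
set rho := g c.
have Bpos : forall u, u != 0 -> txm m A u = g u * txm m B u.
  move=> u u0; rewrite /g /= -mulrA mulVf ?mulr1 //.
  exact/lt0r_neq0/PB.
have ray : forall y, txm m A y <= rho * txm m B y.
  move=> y; have [->|y0] := eqVneq y 0.
    by rewrite !txm0 // mulr0.
  have hA := txm_scale A `|y| (`|y|^-1 *: y).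
  have hB := txm_scale B `|y| (`|y|^-1 *: y).
  rewrite (@normalizeK y y0) in hA hB.
  rewrite hA hB mulrCA ler_wpM2l ?exprn_ge0 //.
  rewrite Bpos; last by apply: sph_neq0; apply: normalize.
  rewrite ler_wpM2r //; first exact/txmB_ge0.
  by apply: cmax; rewrite inE; apply: normalize.
pose phi := txm m A - rho \*: txm m B.
have phid : forall y (i : 'I_n), is_derive y (evec R i) phi
    ((m%:R *: txm1 m A y) ord0 i - rho *: (m%:R *: txm1 m B y) ord0 i).
  move=> y i; have HA := WA y i; have HB := WB y i.
  exact: is_deriveB.
have eig : txm1 m A c = rho *: txm1 m B c.
  apply/rowP => i.
  have hmax : forall y, phi y <= phi c.
    move=> y; rewrite /phi /=.
    rewrite !fctE /= (Bpos c c0) -/rho subrr subr_le0.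
    by have := ray y; rewrite /GRing.scale /=.
  have hder : forall y, derivable phi y (evec R i).
    by move=> y; case: (phid y i).
  have h := @fermat_max phi c (evec R i) _ hmax hder (phid c i).
  have mR : (m%:R : R) != 0 by rewrite pnatr_eq0 -lt0n.
  have e1 : forall M : 'rV[R]_n, (m%:R *: M) ord0 i = m%:R * M ord0 i.
    by move=> M; rewrite mxE.
  rewrite !e1 in h.
  have {}h : m%:R * (txm1 m A c ord0 i - rho * txm1 m B c ord0 i) = 0.
    by rewrite -h mulrBr; congr (_ - _); rewrite /GRing.scale /= mulrCA.
  move/eqP: h; rewrite mulf_eq0 (negbTE mR) /= subr_eq0 => /eqP ->.
  by rewrite [RHS]mxE.
have : rho <= lam_max by apply: lmax; exists c.
move=> rl y; apply: (le_trans (ray y)); apply: ler_wpM2r => //.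
exact: txmB_ge0.
Qed.


Lemma euler_eig A B lam x : (0 < m)%N ->
  txm1 m A x = lam *: txm1 m B x -> txm m A x = lam * txm m B x.
Proof.
move=> m0 e; rewrite !txm_euler // e big_distrr; apply: eq_bigr => i _.
by rewrite [in LHS]mxE mulrCA.
Qed.

Lemma txm1_0 A : (1 < m)%N -> txm1 m A 0 = 0.
Proof.
move=> m1; apply/rowP => i; rewrite !mxE; apply: big1 => t _.
case: t => [[|a s] /= st]; first by move: st; rewrite /= eq_sym -(subnKC m1).
by rewrite big_cons mxE mul0r mulr0.
Qed.

Lemma crit_iff A B x : (0 < m)%N -> weakly_symmetric m A -> weakly_symmetric m B ->
  critical_point (f2 m A B) x <-> txm m B x *: txm1 m B x - txm1 m A x = 0.
Proof.
move=> m0 WA WB; have G := @f2_grad A B x m0 WA WB.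
split => [C|E].
  apply/rowP => i; rewrite [RHS]mxE.
  have := C i; have := G i => h1 h2.
  by rewrite -(@derive_val _ _ _ _ _ _ _ h1) (@derive_val _ _ _ _ _ _ _ h2) mxE.
by move=> i; rewrite -E; exact: G.
Qed.

End Helpers.
Theorem theorem6 (R : realType) (n m : nat) (A B : tensor R n) (lam_max : R) :
  (0 < n)%N -> (0 < m)%N -> ~~ odd m ->
  weakly_symmetric m A -> weakly_symmetric m B -> pos_def m B ->
  Br_eigenvalue m A B lam_max ->
  (forall lam, Br_eigenvalue m A B lam -> lam <= lam_max) ->
  (* gradient formula *)
  (forall x : 'rV[R]_n, has_gradient (f2 m A B) x
      (txm m B x *: txm1 m B x - txm1 m A x)) /\
  (* (a) *)
  coercive (f2 m A B) /\
  (* (b) *)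
  (forall x : 'rV[R]_n, critical_point (f2 m A B) x <->
     (x = 0 \/ exists lam, 0 < lam /\ Br_eigenpair m A B lam x /\ txm m B x = lam)) /\
  (* (c) *)
  (0 < lam_max ->
     forall x, Br_eigenpair m A B lam_max x -> txm m B x = lam_max ->
       f2 m A B x = - ((2 * m%:R)^-1 * lam_max ^+ 2) /\
       (forall y, f2 m A B x <= f2 m A B y)) /\
  (* (d) *)
  (lam_max <= 0 ->
     (forall x, critical_point (f2 m A B) x <-> x = 0) /\
     (forall x, (forall y, f2 m A B x <= f2 m A B y) <-> x = 0)).
Proof.
move=> n0 m0 mev WA WB PB Hev Hmax.
have m1 : (1 < m)%N.
  by move: m0 mev; case: (m) => [|[|k]].
have ray := @rayleigh R n m A B lam_max m0 WA WB PB Hev Hmax.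
have Bge0 : forall y, 0 <= txm m B y by move=> y; exact: txmB_ge0.
have mR : (0 : R) < m%:R by rewrite ltr0n.
set q := (m%:R : R)^-1.
have q0 : 0 < q by rewrite invr_gt0.
have qm : q * m%:R = 1 by rewrite mulVf // lt0r_neq0.
have f2E : forall y, f2 m A B y = q / 2 * txm m B y ^+ 2 - q * txm m A y.
  move=> y; rewrite /f2 invfM.
  by rewrite [2^-1 / _]mulrC.
have low : forall y, q / 2 * txm m B y ^+ 2 - q * (lam_max * txm m B y) <= f2 m A B y.
  move=> y; rewrite f2E lerD2l lerN2; apply: ler_wpM2l; first exact: ltW.
  exact: ray.
have f20 : f2 m A B 0 = 0.
  by rewrite f2E !txm0 // expr0n /= !mulr0 subrr.
have crit : forall x, critical_point (f2 m A B) x <->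
     (x = 0 \/ exists lam, 0 < lam /\ Br_eigenpair m A B lam x /\ txm m B x = lam).
  move=> x; rewrite (@crit_iff R n m A B x m0 WA WB); split.
    move=> /eqP; rewrite subr_eq0 => /eqP E.
    have [->|x0] := eqVneq x 0; first by left.
    right; exists (txm m B x); split; first exact: PB.
    by split.
  case=> [->|[lam [l0 [[x0 E] Bx]]]].
    by rewrite txm1_0 // txm1_0 // scaler0 subr0.
  by rewrite Bx E subrr.
split; first by move=> x; exact: f2_grad.
split.
  case: Hev => [x0 [x00 _]].
  have [beta b0 Bl] := @B_lower R n m B x0 m0 PB x00.
  move=> M.
  set K := 2 * `|lam_max| + 2 * m%:R * `|M| + 2.
  exists (Num.max 1 (K / beta)) => x.
  rewrite ge_max => /andP [s1 sK].
  set s := `|x| in s1 sK.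
  have sm : s <= s ^+ m.
    exact: ler_eXnr.
  have bK : K <= txm m B x.
    apply: le_trans (Bl x); rewrite -/s.
    apply: (@le_trans _ _ (beta * s)).
      by rewrite -ler_pdivrMl // mulrC.
    by rewrite ler_wpM2l // ltW.
  apply: le_trans (low x).
  set b := txm m B x in bK *.
  have hl : - `|lam_max| <= lam_max /\ lam_max <= `|lam_max|.
    split; last exact: ler_norm.
    by rewrite lerNl -normrN ler_norm.
  have hM : M <= `|M| by exact: ler_norm.
  have nM : 0 <= `|M| by exact: normr_ge0.
  have nl : 0 <= `|lam_max| by exact: normr_ge0.
  case: hl => hl1 hl2.
  rewrite /K in bK.
  have mM : 0 <= 2 * m%:R * `|M| by rewrite mulr_ge0 // mulr_ge0 // ltW.
  have mM2 : 2 * m%:R * `|M| = 2 * (m%:R * `|M|) by rewrite mulrA.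
  have b1 : 1 <= b by lra.
  have e1 : q / 2 * b ^+ 2 - q * (lam_max * b) = q * b * (b / 2 - lam_max).
    by rewrite expr2; field.
  rewrite e1.
  have e2 : m%:R * `|M| + 1 <= b / 2 - lam_max by lra.
  apply: (@le_trans _ _ (q * b * (m%:R * `|M| + 1))); last first.
    rewrite ler_wpM2l //.
    by apply: mulr_ge0; [exact: ltW | exact: le_trans ler01 b1].
  apply: (@le_trans _ _ (q * (m%:R * `|M| + 1))); last first.
    rewrite ler_wpM2r //; first by rewrite ler_peMr // ltW.
  rewrite mulrDr mulrA qm mul1r mulr1; apply: le_trans hM _.
  by rewrite lerDl ltW.
split; first exact: crit.
split.
  move=> lpos x [x0 E] Bx.
  have Ax := @euler_eig R n m A B lam_max x m0 E.
  have fx : f2 m A B x = - ((2 * m%:R)^-1 * lam_max ^+ 2).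
    rewrite f2E Ax Bx /q invfM; field.
    exact: lt0r_neq0.
  split => // y; rewrite fx; apply: le_trans (low y).
  set b := txm m B y.
  have sq : 0 <= (b - lam_max) ^+ 2 by exact: sqr_ge0.
  rewrite invfM -/q.
  have : 0 <= q / 2 * (b - lam_max) ^+ 2 by rewrite mulr_ge0 // divr_ge0 // ltW.
  have -> : q / 2 * (b - lam_max) ^+ 2 =
    (q / 2 * b ^+ 2 - q * (lam_max * b)) - (- (2^-1 * q * lam_max ^+ 2)).
    by rewrite !expr2; field.
  by rewrite subr_ge0 [2^-1 * q]mulrC.
move=> lneg.
have crit0 : forall x, critical_point (f2 m A B) x <-> x = 0.
  move=> x; rewrite crit; split; last by left.
  case=> // [[lam [l0 [ep _]]]].
  have : lam <= lam_max by apply: Hmax; exists x.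
  by move=> ll; have := lt_le_trans l0 (le_trans ll lneg); rewrite ltxx.
split => // x; split; last first.
  move=> -> y; rewrite f20; apply: le_trans (low y).
  set b := txm m B y.
  have hb : 0 <= b := Bge0 y.
  have : 0 <= q / 2 * b ^+ 2 by rewrite mulr_ge0 // ?sqr_ge0 // divr_ge0 // ltW.
  have : q * (lam_max * b) <= 0.
    by rewrite pmulr_rle0 // mulr_le0_ge0.
  lra.
move=> xmin; apply/eqP; apply/negPn/negP => x0.
have := xmin 0; rewrite f20.
have hb : 0 < txm m B x := PB x x0.
have := low x.
set b := txm m B x in hb *.
have : 0 < q / 2 * b ^+ 2 by rewrite mulr_gt0 // ?exprn_gt0 // divr_gt0.
have : q * (lam_max * b) <= 0.
  by rewrite pmulr_rle0 // mulr_le0_ge0 // ltW.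
lra.
Qed.
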